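(* Let $\Gamma$ be a discrete group and $X$ a compact $\Gamma$-space. The following are germinal representations of $(\Gamma,X)$: (i) the pair $(\kappa_\nu,\rho)$, where $\nu$ is a $\sigma$-finite quasi-invariant measure on $X$, $\kappa_\nu$ is the Koopman representation on $L^2(X,\nu)$, and $\rho\colon C(X)\to B(L^2(X,\nu))$ is the representation by multiplication operators; (ii) the pair $(\lambda_{\Gamma/H},\mathcal P_x)$, where $x\in X$, $H$ is a subgroup with $\Gamma_x^0\le H\le\Gamma_x$, and $\mathcal P_x\colon C(X)\to B(\ell^2(\Gamma/H))$ is the Poisson map.
   Context: A compact $\Gamma$-space is a compact Hausdorff space with a $\Gamma$-action by homeomorphisms; $\Gamma$ acts on $C(X)$ by $(gf)(x)=f(g^{-1}x)$; $X^g=\{x:gx=x\}$; $\Gamma_x=\{g:gx=x\}$, $\Gamma_x^0=\{g:g\text{ fixes pointwise an open neighborhood of }x\}$. A germinal representation of $(\Gamma,X)$ is a pair $(\pi,\rho)$ with $\pi$ a unitary representation on $\mathcal H_\pi$ and $\rho\colon C(X)\to B(\mathcal H_\pi)$ a unital $*$-homomorphism with $\rho(gf)=\pi(g)\rho(f)\pi(g)^*$, such that $\pi(g)\rho(f)=\rho(f)$ for all $g\in\Gamma$ and $f\in C(X)$ with $\operatorname{supp}f\subseteq X^g$. The Koopman representation is $\kappa_\nu(g)\xi(y)=\big(\tfrac{dg\nu}{d\nu}(y)\big)^{1/2}\xi(g^{-1}y)$. $\lambda_{\Gamma/H}$ is the quasi-regular representation on $\ell^2(\Gamma/H)$, and $\mathcal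 P_x(f)$ is multiplication by the function $gH\mapsto f(gx)$ (well defined since $H\le\Gamma_x$). *)

(* Defs.v *)
From HB Require Import structures.
From mathcomp Require Import all_boot all_order all_algebra monoid.
From mathcomp Require Import all_classical all_reals all_analysis.
From mathcomp Require Import complex.
Import numFieldNormedType.Exports.

Set Implicit Arguments.
Unset Strict Implicit.
Unset Printing Implicit Defensive.
Import Order.TTheory GRing.Theory Num.Theory.

Local Open Scope classical_set_scope.
Local Open Scope ring_scope.
Local Open Scope complex_scope.

Definition discr (T : pointedType) : Type := T.
HB.instance Definition _ (T : pointedType) := Pointed.on (discr T).
HB.instance Definition _ (T : pointedType) :=
  @isMeasurable.Build default_measure_display (discr T)
    discrete_measurable discrete_measurable0
    discrete_measurableC discrete_measurableU.

Lemma discr_measurable (T : pointedType) (A : set (discr T)) : measurable A.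
Proof. by []. Qed.

Definition borelT (X : ptopologicalType) := g_sigma_algebraType (@open X).

(* Vectors are represented by functions T -> R[i]; the Hilbert space         *)
(* L^2(T,mu) is the set of square-integrable measurable functions, with two  *)
(* functions identified when they agree mu-a.e.                              *)

Definition cabs2 {R : realType} (z : R[i]) : R :=
  complex.Re z ^+ 2 + complex.Im z ^+ 2.

Definition cmeasurable {d} {T : measurableType d} {R : realType}
    (f : T -> R[i]) : Prop :=
  measurable_fun setT (fun t => complex.Re (f t)) /\
  measurable_fun setT (fun t => complex.Im (f t)).

Definition L2 {d} {T : measurableType d} {R : realType}
    (mu : {measure set T -> \bar R}) (xi : T -> R[i]) : Prop :=
  cmeasurable xi /\ mu.-integrable setT (fun t => (cabs2 (xi t))%:E).

Definition L2eq {d} {T : measurableType d} {R : realType}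
    (mu : {measure set T -> \bar R}) (xi eta : T -> R[i]) : Prop :=
  xi = eta %[ae mu].

Definition L2ip {d} {T : measurableType d} {R : realType}
    (mu : {measure set T -> \bar R}) (xi eta : T -> R[i]) : R[i] :=
  Complex (Rintegral mu setT (fun t => complex.Re (xi t * (eta t)^*)))
          (Rintegral mu setT (fun t => complex.Im (xi t * (eta t)^*))).

Definition L2norm2 {d} {T : measurableType d} {R : realType}
    (mu : {measure set T -> \bar R}) (xi : T -> R[i]) : R :=
  Rintegral mu setT (fun t => cabs2 (xi t)).

(** operators on L^2(T, mu), represented on representatives *)
Definition op (T : Type) (R : realType) := (T -> R[i]) -> (T -> R[i]).

Definition op_eq {d} {T : measurableType d} {R : realType}
    (mu : {measure set T -> \bar R}) (A B : op T R) : Prop :=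
  forall xi, L2 mu xi -> L2eq mu (A xi) (B xi).

Definition bounded_op {d} {T : measurableType d} {R : realType}
    (mu : {measure set T -> \bar R}) (A : op T R) : Prop :=
  [/\ forall xi, L2 mu xi -> L2 mu (A xi),
      forall xi eta, L2 mu xi -> L2 mu eta -> L2eq mu xi eta ->
        L2eq mu (A xi) (A eta),
      forall (a : R[i]) xi eta, L2 mu xi -> L2 mu eta ->
        L2eq mu (A (fun t => a * xi t + eta t)) (fun t => a * A xi t + A eta t)
    & exists M : R, forall xi, L2 mu xi ->
        L2norm2 mu (A xi) <= M * L2norm2 mu xi].

Definition adjoint_of {d} {T : measurableType d} {R : realType}
    (mu : {measure set T -> \bar R}) (A B : op T R) : Prop :=
  forall xi eta, L2 mu xi -> L2 mu eta -> L2ip mu (A xi) eta = L2ip mu xi (B eta).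

Definition unitary_op {d} {T : measurableType d} {R : realType}
    (mu : {measure set T -> \bar R}) (U : op T R) : Prop :=
  bounded_op mu U /\
  exists V : op T R, [/\ bounded_op mu V, adjoint_of mu U V,
                         op_eq mu (U \o V) id & op_eq mu (V \o U) id].

Definition unitary_rep (G : groupType) {d} {T : measurableType d} {R : realType}
    (mu : {measure set T -> \bar R}) (pi : G -> op T R) : Prop :=
  [/\ forall g, unitary_op mu (pi g),
      op_eq mu (pi 1%g) id
    & forall g h, op_eq mu (pi (g * h)%g) (pi g \o pi h)].

(** act is an action of G on X by homeomorphisms (each act g is continuous
    with continuous inverse act g^-1) *)
Definition gspace (G : groupType) (X : topologicalType) (act : G -> X -> X) : Prop :=
  [/\ forall g, continuous (act g),
      forall x, act 1%g x = x
    & forall g h x, act (g * h)%g x = act g (act h x)].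

Definition Cfun {X : topologicalType} {R : realType} (f : X -> R[i]) : Prop :=
  continuous (fun x => complex.Re (f x)) /\ continuous (fun x => complex.Im (f x)).

Definition fact (G : groupType) (X : Type) (act : G -> X -> X) {R : realType}
    (g : G) (f : X -> R[i]) : X -> R[i] :=
  fun x => f (act g^-1%g x).

Definition supp {X : topologicalType} {R : realType} (f : X -> R[i]) : set X :=
  closure [set x | f x != 0].

Definition fixset (G : groupType) (X : Type) (act : G -> X -> X) (g : G) : set X :=
  [set x | act g x = x].

Definition unital_star_hom {X : topologicalType} {d} {T : measurableType d}
    {R : realType} (mu : {measure set T -> \bar R})
    (rho : (X -> R[i]) -> op T R) : Prop :=
  [/\ forall f, Cfun f -> bounded_op mu (rho f),
      forall (a : R[i]) f g, Cfun f -> Cfun g ->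
        op_eq mu (rho (fun x => a * f x + g x))
                 (fun xi t => a * rho f xi t + rho g xi t),
      forall f g, Cfun f -> Cfun g ->
        op_eq mu (rho (fun x => f x * g x)) (rho f \o rho g),
      op_eq mu (rho (fun _ => 1)) id
    & forall f, Cfun f -> adjoint_of mu (rho f) (rho (fun x => (f x)^*))].

Definition germinal_rep (G : groupType) (X : topologicalType) (act : G -> X -> X)
    {d} {T : measurableType d} {R : realType} (mu : {measure set T -> \bar R})
    (pi : G -> op T R) (rho : (X -> R[i]) -> op T R) : Prop :=
  [/\ unitary_rep mu pi,
      unital_star_hom mu rho,
      forall g f, Cfun f -> forall S : op T R,
        bounded_op mu S -> adjoint_of mu (pi g) S ->
        op_eq mu (rho (fact act g f)) (pi g \o rho f \o S)
    &
      forall g f, Cfun f -> supp f `<=` fixset act g ->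
        op_eq mu (pi g \o rho f) (rho f)].

(** nu is quasi-invariant: g nu and nu have the same null sets, where
    (g nu)(A) = nu(g^-1 A) = nu (act g @^-1` A) *)
Definition quasi_invariant (G : groupType) (X : ptopologicalType)
    (act : G -> X -> X) {R : realType} (nu : {measure set borelT X -> \bar R}) : Prop :=
  forall g (A : set (borelT X)), measurable A ->
    (nu A = 0%E <-> nu (act g @^-1` A) = 0%E).

(** D g is (a nonnegative version of) the Radon-Nikodym derivative d(g nu)/d nu *)
Definition rn_derivative (G : groupType) (X : ptopologicalType)
    (act : G -> X -> X) {R : realType} (nu : {measure set borelT X -> \bar R})
    (D : G -> borelT X -> R) : Prop :=
  forall g, [/\ measurable_fun setT (D g),
                forall y, 0 <= D g y
              & forall A : set (borelT X), measurable A ->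
                  nu (act g @^-1` A) = (\int[nu]_(y in A) (D g y)%:E)%E].

Definition koopman (G : groupType) (X : ptopologicalType) (act : G -> X -> X)
    {R : realType} (D : G -> borelT X -> R) (g : G) : op (borelT X) R :=
  fun xi y => (Num.sqrt (D g y))%:C * xi (act g^-1%g y).

Definition mult_op (X : ptopologicalType) {R : realType} (f : X -> R[i]) :
    op (borelT X) R :=
  fun xi y => f y * xi y.

(* Gamma/H is represented inside the discrete space `set G`: we use the      *)
(* counting measure restricted to the set of left cosets gH, so that         *)
(* L^2(set G, cosetmeas H) = l^2(Gamma/H).                                   *)

Definition subgroup (G : groupType) (H : set G) : Prop :=
  [/\ H 1%g, forall g h, H g -> H h -> H (g * h)%g & forall g, H g -> H g^-1%g].

Definition lcoset (G : groupType) (g : G) (H : set G) : set G :=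
  [set (g * h)%g | h in H].

Definition is_coset (G : groupType) (H : set G) : set (discr (set G)) :=
  [set A | exists g, A = lcoset g H].

Definition cosetmeas (R : realType) (G : groupType) (H : set G) :
    {measure set discr (set G) -> \bar R} :=
  mrestr (@counting (discr (set G)) R) (discr_measurable (is_coset H)).

Definition quasi_reg (R : realType) (G : groupType) (g : G) : op (discr (set G)) R :=
  fun xi A => xi [set (g^-1 * a)%g | a in A].

(** Poisson map: P_x(f) xi (kH) = f(k x) xi(kH) *)
Definition poisson (G : groupType) (X : topologicalType) (act : G -> X -> X)
    (x : X) {R : realType} (f : X -> R[i]) : op (discr (set G)) R :=
  fun xi A => f (act (xget 1%g A) x) * xi A.

Definition stab (G : groupType) (X : Type) (act : G -> X -> X) (x : X) : set G :=
  [set g | act g x = x].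

Definition stab0 (G : groupType) (X : topologicalType) (act : G -> X -> X) (x : X) :
    set G :=
  [set g | exists U : set X, [/\ open U, U x & forall y, U y -> act g y = y]].

(* Main.v *)
Set Warnings "-all".
From Pilot Require Import Defs.
From HB Require Import structures.
From mathcomp Require Import all_boot all_order all_algebra monoid.
From mathcomp Require Import all_classical all_reals all_analysis.
From mathcomp Require Import complex.
From mathcomp Require Import measurable_realfun.
From mathcomp Require finmap.
From mathcomp Require Import ring lra.
Import numFieldNormedType.Exports.
Set Implicit Arguments.
Unset Strict Implicit.
Unset Printing Implicit Defensive.
Import Order.TTheory GRing.Theory Num.Theory.
Local Open Scope classical_set_scope.
Local Open Scope ring_scope.


Section cplx.
Variable R : realType.
Implicit Types a z : R[i].

Lemma cabs2_ge0 z : 0 <= cabs2 z.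
Proof. by case: z => a b; rewrite /cabs2 /= addr_ge0 // sqr_ge0. Qed.
Lemma cabs2M a z : cabs2 (a * z) = cabs2 a * cabs2 z.
Proof. case: a => a b; case: z => c e; rewrite /cabs2 /=. ring. Qed.
Lemma cabs2D a z : cabs2 (a + z) <= 2 * (cabs2 a + cabs2 z).
Proof. case: a => a b; case: z => c e; rewrite /cabs2 /=.
have h1 := sqr_ge0 (a-c); have h2 := sqr_ge0 (b-e); nra. Qed.
Lemma ReM a z : `|complex.Re (a * z^*)| <= cabs2 a + cabs2 z.
Proof. case: a => a b; case: z => c e; rewrite /cabs2 /=.
have h1 := sqr_ge0 (a+c); have h2 := sqr_ge0 (a-c); have h3 := sqr_ge0 (b+e); have h4 := sqr_ge0 (b-e).
rewrite ler_norml; apply/andP; split; nra.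
Qed.
Lemma ImM a z : `|complex.Im (a * z^*)| <= cabs2 a + cabs2 z.
Proof. case: a => a b; case: z => c e; rewrite /cabs2 /=.
have h1 := sqr_ge0 (a+e); have h2 := sqr_ge0 (a-e); have h3 := sqr_ge0 (b+c); have h4 := sqr_ge0 (b-c).
rewrite ler_norml; apply/andP; split; nra.
Qed.
Lemma Re_self z : complex.Re (z * z^*) = cabs2 z.
Proof. case: z => a b; rewrite /cabs2 /=; ring. Qed.
Lemma cabs2_eq0 z : cabs2 z = 0 -> z = 0.
Proof.
case: z => a b; rewrite /cabs2 /= => h.
have ha : a ^+ 2 = 0 by apply/eqP; rewrite eq_le sqr_ge0 andbT; nra.
have hb : b ^+ 2 = 0 by apply/eqP; rewrite eq_le sqr_ge0 andbT; nra.
move/eqP: ha; rewrite sqrf_eq0 => /eqP ->; move/eqP: hb; rewrite sqrf_eq0 => /eqP ->.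
by [].
Qed.
Lemma ReD a z : complex.Re (a + z) = complex.Re a + complex.Re z.
Proof. by case: a; case: z. Qed.
Lemma ImD a z : complex.Im (a + z) = complex.Im a + complex.Im z.
Proof. by case: a; case: z. Qed.
Lemma ReMul a z : complex.Re (a * z) = complex.Re a * complex.Re z - complex.Im a * complex.Im z.
Proof. by case: a; case: z. Qed.
Lemma ImMul a z : complex.Im (a * z) = complex.Re a * complex.Im z + complex.Im a * complex.Re z.
Proof. by case: a => a b; case: z => c e /=; ring. Qed.
Lemma cabs2E z : cabs2 z = complex.Re z ^+ 2 + complex.Im z ^+ 2.
Proof. by []. Qed.
End cplx.

Section L2gen.
Context d (T : measurableType d) (R : realType) (mu : {measure set T -> \bar R}).
Implicit Types xi eta : T -> R[i].

Lemma cmeas_add xi eta : cmeasurable xi -> cmeasurable eta ->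
  cmeasurable (fun t => xi t + eta t).
Proof.
move=> [h1 h2] [h3 h4]; split.
  under eq_fun do rewrite ReD. exact: measurable_funD.
under eq_fun do rewrite ImD. exact: measurable_funD.
Qed.

Lemma cmeas_mul xi eta : cmeasurable xi -> cmeasurable eta ->
  cmeasurable (fun t => xi t * eta t).
Proof.
move=> [h1 h2] [h3 h4]; split.
  under eq_fun do rewrite ReMul. by apply: measurable_funB; apply: measurable_funM.
under eq_fun do rewrite ImMul. by apply: measurable_funD; apply: measurable_funM.
Qed.

Lemma cmeas_cst (c : R[i]) : cmeasurable (fun _ : T => c).
Proof. by split; exact: measurable_cst. Qed.

Lemma cmeas_cabs2 xi : cmeasurable xi -> measurable_fun setT (fun t => cabs2 (xi t)).
Proof.
move=> [h1 h2]; rewrite /cabs2.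
by apply: measurable_funD; apply: measurable_funX.
Qed.

Lemma cmeas_conj xi : cmeasurable xi -> cmeasurable (fun t => (xi t)^*).
Proof.
move=> [h1 h2]; split.
  by rewrite (_ : (fun t => _) = (fun t => complex.Re (xi t))) //; apply: funext => t; case: (xi t).
rewrite (_ : (fun t => _) = (fun t => - complex.Im (xi t))); last by apply: funext => t; case: (xi t).
exact: measurable_funN.
Qed.

Lemma L2_meas xi : L2 mu xi -> cmeasurable xi. Proof. by case. Qed.

Lemma L2_int xi : L2 mu xi -> mu.-integrable setT (EFin \o (fun t => cabs2 (xi t))).
Proof. by case. Qed.

Lemma L2_mulb (m : T -> R[i]) (M : R) xi : cmeasurable m ->
  (forall t, cabs2 (m t) <= M) -> L2 mu xi -> L2 mu (fun t => m t * xi t).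
Proof.
move=> mm hM [mxi ixi]; split; first exact: cmeas_mul.
apply: (@le_integrable _ _ _ _ _ _ _ (fun t => (`|M| * cabs2 (xi t))%:E)) => //.
- by apply/measurable_EFinP; apply: cmeas_cabs2; exact: cmeas_mul.
- move=> t _; rewrite !gee0_abs ?lee_fin ?mulr_ge0 ?cabs2_ge0 //.
  rewrite cabs2M ler_wpM2r ?cabs2_ge0 //; apply: (le_trans (hM t)); exact: ler_norm.
- have -> : (fun t => (`|M| * cabs2 (xi t))%:E) =
    (fun t => (`|M|%:E * (EFin \o (fun t => cabs2 (xi t))) t)%E).
    by apply: funext => t; rewrite EFinM.
  exact: integrableZl.
Qed.

Lemma L2_add xi eta : L2 mu xi -> L2 mu eta -> L2 mu (fun t => xi t + eta t).
Proof.
move=> [mxi ixi] [meta ieta]; split; first exact: cmeas_add.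
apply: (@le_integrable _ _ _ _ _ _ _ (fun t => (2 * cabs2 (xi t) + 2 * cabs2 (eta t))%:E)) => //.
- by apply/measurable_EFinP; apply: cmeas_cabs2; exact: cmeas_add.
- move=> t _; have := cabs2D (xi t) (eta t); have := cabs2_ge0 (xi t);
  have := cabs2_ge0 (eta t); have := cabs2_ge0 (xi t + eta t).
  move=> *; rewrite !gee0_abs ?lee_fin; lra.
- have -> : (fun t => (2 * cabs2 (xi t) + 2 * cabs2 (eta t))%:E) =
    (fun t => (2%:E * (EFin \o (fun t => cabs2 (xi t))) t) + (2%:E * (EFin \o (fun t => cabs2 (eta t))) t))%E.
    by apply: funext => t; rewrite EFinD !EFinM.
  by apply: integrableD => //; apply: integrableZl.
Qed.

Lemma L2_sub xi eta : L2 mu xi -> L2 mu eta -> L2 mu (fun t => xi t - eta t).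
Proof.
move=> h1 h2.
have h3 : L2 mu (fun t => (-1) * eta t).
  apply: (@L2_mulb (fun _ => -1) 1) => //.
  by move=> t; rewrite /cabs2 /=; lra.
have := L2_add h1 h3.
by rewrite (_ : (fun t => _) = (fun t => xi t - eta t)) // ; apply: funext => t; rewrite mulN1r.
Qed.

Lemma ip_intRe xi eta : L2 mu xi -> L2 mu eta ->
  mu.-integrable setT (EFin \o (fun t => complex.Re (xi t * (eta t)^*))).
Proof.
move=> [mxi ixi] [meta ieta].
apply: (@le_integrable _ _ _ _ _ _ _ (fun t => (cabs2 (xi t) + cabs2 (eta t))%:E)) => //.
- apply/measurable_EFinP; case: (cmeas_mul mxi (cmeas_conj meta)) => //.
- move=> t _; have := ReM (xi t) (eta t); have := cabs2_ge0 (xi t);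
  have := cabs2_ge0 (eta t).
  move=> h1 h2 h3; rewrite /comp !abse_EFin lee_fin (ger0_norm (addr_ge0 h2 h1)) //.
- have -> : (fun t => (cabs2 (xi t) + cabs2 (eta t))%:E) =
    (fun t => ((EFin \o (fun t => cabs2 (xi t))) t) + ((EFin \o (fun t => cabs2 (eta t))) t))%E.
    by apply: funext => t; rewrite EFinD.
  exact: integrableD.
Qed.

Lemma ip_zero_ae delta : L2 mu delta ->
  complex.Re (L2ip mu delta delta) = 0 -> L2eq mu delta (fun _ => 0).
Proof.
move=> [md id]; rewrite /L2ip /=.
under eq_fun do rewrite Re_self.
move=> h0.
have fin := integrable_fin_num measurableT id.
have h1 : (\int[mu]_(x in setT) (cabs2 (delta x))%:E = 0)%E.
  by rewrite -(fineK fin) /= -/(Rintegral _ _ _) h0.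
have mE : measurable_fun setT (EFin \o (fun t => cabs2 (delta t))).
  by apply/measurable_EFinP; exact: cmeas_cabs2.
have := (ae_eq_integral_abs mu measurableT mE).1.
have -> : (\int[mu]_(x in setT) `|(EFin \o (fun t => cabs2 (delta t))) x|)%E = 0%E.
  by rewrite -h1; apply: eq_integral => t _; rewrite /comp abse_EFin ger0_norm ?cabs2_ge0.
move=> /(_ erefl); apply: filterS => t /= h _.
by apply: cabs2_eq0; move: (h I) => /= [].
Qed.

Lemma L2eq_refl xi : L2eq mu xi xi.
Proof. exact: ae_eq_refl. Qed.
Lemma L2eq_sym xi eta : L2eq mu xi eta -> L2eq mu eta xi.
Proof. exact: ae_eq_sym. Qed.
Lemma L2eq_trans xi eta zeta : L2eq mu xi eta -> L2eq mu eta zeta -> L2eq mu xi zeta.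
Proof. exact: ae_eq_trans. Qed.
Lemma L2eq_pw xi eta : (forall t, xi t = eta t) -> L2eq mu xi eta.
Proof. by move=> h; rewrite (_ : xi = eta) ?funeqE //; exact: L2eq_refl. Qed.

Lemma adjoint_unique (A S S' : op T R) : adjoint_of mu A S -> adjoint_of mu A S' ->
  (forall xi, L2 mu xi -> L2 mu (S xi)) -> (forall xi, L2 mu xi -> L2 mu (S' xi)) ->
  op_eq mu S S'.
Proof.
move=> hS hS' LS LS' eta Leta.
pose delta := fun t => S eta t - S' eta t.
have Ld : L2 mu delta by apply: L2_sub; [exact: LS|exact: LS'].
have e : L2ip mu delta (S eta) = L2ip mu delta (S' eta) by rewrite -hS // -hS'.
have : complex.Re (L2ip mu delta delta) = 0.
  have e2 : complex.Re (L2ip mu delta (S eta)) - complex.Re (L2ip mu delta (S' eta)) = 0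
    by rewrite e subrr.
  rewrite -e2 /L2ip /= -RintegralB //; last 2 first.
    exact: ip_intRe Ld (LS _ Leta).
    exact: ip_intRe Ld (LS' _ Leta).
  apply: eq_Rintegral => t _.
  rewrite /delta; case: (S eta t) => a b; case: (S' eta t) => c e' /=; ring.
move/(ip_zero_ae Ld); apply: filterS => t h /h.
by rewrite /delta => /eqP; rewrite subr_eq0 => /eqP.
Qed.

Lemma op_eq_comp3 (P Q S S' : op T R) : bounded_op mu P -> bounded_op mu Q ->
  (forall xi, L2 mu xi -> L2 mu (S xi)) -> (forall xi, L2 mu xi -> L2 mu (S' xi)) ->
  op_eq mu S S' -> op_eq mu (P \o Q \o S) (P \o Q \o S').
Proof.
move=> [P1 P2 _ _] [Q1 Q2 _ _] LS LS' e xi Lxi /=.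
apply: P2; try apply: Q1; try apply: LS; try apply: LS'; try done.
by apply: Q2; [apply: LS|apply: LS'|apply: e].
Qed.

Lemma unitary_rep_of (G : groupType) (pi : G -> op T R) :
  (forall g, bounded_op mu (pi g)) ->
  (forall g, adjoint_of mu (pi g) (pi g^-1%g)) ->
  op_eq mu (pi 1%g) id ->
  (forall g h, op_eq mu (pi (g * h)%g) (pi g \o pi h)) -> unitary_rep mu pi.
Proof.
move=> hb hadj h1 hm; split => //= g; split => //; exists (pi g^-1%g); split => //.
- move=> xi Lxi; apply: L2eq_trans (h1 _ Lxi).
  by apply: L2eq_sym; have := hm g g^-1%g xi Lxi; rewrite mulgV.
- move=> xi Lxi; apply: L2eq_trans (h1 _ Lxi).
  by apply: L2eq_sym; have := hm g^-1%g g xi Lxi; rewrite mulVg.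
Qed.

Lemma germinal_of (G : groupType) (X : topologicalType) (act : G -> X -> X)
    (pi : G -> op T R) (rho : (X -> R[i]) -> op T R) :
  (forall g, bounded_op mu (pi g)) ->
  (forall g, adjoint_of mu (pi g) (pi g^-1%g)) ->
  op_eq mu (pi 1%g) id ->
  (forall g h, op_eq mu (pi (g * h)%g) (pi g \o pi h)) ->
  unital_star_hom mu rho ->
  (forall g f, Cfun f -> op_eq mu (rho (Pilot.Defs.fact act g f)) (pi g \o rho f \o pi g^-1%g)) ->
  (forall g f, Cfun f -> supp f `<=` Defs.fixset act g -> op_eq mu (pi g \o rho f) (rho f)) ->
  germinal_rep act mu pi rho.
Proof.
move=> hb hadj h1 hm hrho heq hgerm; split => //.
  exact: unitary_rep_of.
move=> g f cf S bS aS xi Lxi.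
apply: L2eq_trans (heq g f cf xi Lxi) _.
have e : op_eq mu S (pi g^-1%g).
  apply: adjoint_unique aS (hadj g) _ _; first by case: bS.
  by case: (hb g^-1%g).
case: hrho => hr _ _ _ _.
apply: L2eq_sym; apply: (op_eq_comp3 (hb g) (hr f cf)) => //.
- by case: bS.
- by case: (hb g^-1%g).
Qed.

Lemma bounded_mult (m : T -> R[i]) (M : R) : cmeasurable m ->
  (forall t, cabs2 (m t) <= M) -> bounded_op mu (fun xi t => m t * xi t).
Proof.
move=> mm hM; split.
- by move=> xi Lxi; exact: (L2_mulb mm hM).
- by move=> xi eta _ _; apply: filterS => t h /h ->.
- move=> a xi eta _ _; apply: L2eq_pw => t /=; ring.
- exists `|M| => xi Lxi; rewrite /L2norm2 -RintegralZl //; last exact: L2_int.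
  apply: le_Rintegral => //.
  + exact: L2_int (L2_mulb mm hM Lxi).
  + have := L2_int Lxi; set F := (X in mu.-integrable _ X) => iF.
    have -> : (EFin \o (fun t => `|M| * cabs2 (xi t))) = (fun t => (`|M|%:E * F t)%E).
      by apply: funext => t; rewrite /F /= EFinM.
    exact: integrableZl.
  + move=> t _; rewrite cabs2M ler_wpM2r ?cabs2_ge0 //; apply: (le_trans (hM t)); exact: ler_norm.
Qed.

End L2gen.

Lemma cfun_bounded (R : realType) (X : topologicalType) (f : X -> R[i]) :
  compact [set: X] -> Cfun f -> exists M : R, forall x, cabs2 (f x) <= M.
Proof.
move=> cX [c1 c2].
have cphi : continuous (fun x => cabs2 (f x)).
  move=> x; rewrite /cabs2.
  apply: cvgD; apply: cvgM; by [apply: c1|apply: c2].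
have := compact_bounded (continuous_compact (continuous_subspaceT cphi) cX).
move=> [M0 [_ hM]]; exists (M0 + 1) => x.
have /hM : M0 < M0 + 1 by lra.
move=> /(_ (cabs2 (f x))) h.
have := h (ex_intro2 _ _ x I erefl).
by move=> /=; apply: le_trans; apply: ler_norm.
Qed.

Lemma cfun_open_nz (R : realType) (X : topologicalType) (f : X -> R[i]) :
  Cfun f -> open [set y | f y != 0].
Proof.
move=> [c1 c2].
have -> : [set y | f y != 0] = (fun y => complex.Re (f y)) @^-1` [set r | r != 0]
   `|` (fun y => complex.Im (f y)) @^-1` [set r | r != 0].
  apply/seteqP; split => y /=.
    case: (f y) => a b /=; case: (eqVneq a 0) => [->|ha]; last by left.
    case: (eqVneq b 0) => [->|hb]; last by right.
    by rewrite eqxx.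
  case: (f y) => a b /= hab; apply/eqP => -[ea eb].
  by case: hab; rewrite ?ea ?eb eqxx.
apply: openU; apply: open_comp; try exact: open_neq.
  by move=> y _; apply: c1.
by move=> y _; apply: c2.
Qed.

Section ush.
Context d (T : measurableType d) (R : realType) (mu : {measure set T -> \bar R}).

Lemma ush_comp (X : topologicalType) (p : T -> X) : compact [set: X] ->
  (forall f : X -> R[i], Cfun f -> cmeasurable (fun t => f (p t))) ->
  unital_star_hom mu (fun (f : X -> R[i]) (xi : T -> R[i]) t => f (p t) * xi t).
Proof.
move=> cX hm; split.
- move=> f cf; have [M hM] := cfun_bounded cX cf.
  exact: (@bounded_mult _ _ _ mu _ _ (hm f cf) (fun t => hM (p t))).
- by move=> a f g _ _ xi _; apply: L2eq_pw => t /=; ring.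
- by move=> f g _ _ xi _; apply: L2eq_pw => t /=; ring.
- by move=> xi _; apply: L2eq_pw => t /=; ring.
- move=> f _ xi eta _ _; rewrite /L2ip; congr Complex; apply: eq_Rintegral => t _;
  case: (f (p t)) => a b; case: (xi t) => c e; case: (eta t) => u v /=; ring.
Qed.

End ush.


Lemma counting_eq0 (T : choiceType) (R : realType) (S : set T) :
  @counting T R S = 0%E -> S = set0.
Proof.
rewrite /counting; case: ifPn => // /asboolP fS [] /eqP.
rewrite pnatr_eq0 finmap.cardfs_eq0 => /eqP /fset_set_set0; exact.
Qed.

Lemma counting_image (T : choiceType) (R : realType) (f g : T -> T) :
  cancel f g -> forall S, @counting T R (f @` S) = counting S.
Proof.
move=> fK S; rewrite /counting.
have e : g @` (f @` S) = S.
  apply/seteqP; split => [x [y [z Sz <-] <-]|x Sx]; first by rewrite fK.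
  by exists (f x); [exists x|rewrite fK].
case: (pselect (finite_set S)) => fS.
  rewrite asboolT ?asboolT //; last exact: finite_image.
  rewrite fset_set_image // finmap.card_imfset //; exact: can_inj fK.
rewrite asboolF ?asboolF //.
by move=> /(finite_image g); rewrite e.
Qed.

Section coset.
Context (R : realType) (G : groupType) (H : set G).
Hypothesis HH : subgroup H.
Local Notation mu := (cosetmeas R H).
Local Notation C := (is_coset H).

Definition tr (h : G) (A : set G) : set G := [set (h * a)%g | a in A].

Lemma trM a b A : tr a (tr b A) = tr (a * b)%g A.
Proof.
apply/seteqP; split => [x [y [z Az <-] <-]|x [z Az <-]].
  by exists z => //; rewrite mulgA.
by exists (b * z)%g; [exists z|rewrite mulgA].
Qed.

Lemma tr1 A : tr 1%g A = A.
Proof.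
apply/seteqP; split => [x [y Ay <-]|x Ax]; first by rewrite mul1g.
by exists x => //; rewrite mul1g.
Qed.

Lemma trK h : cancel (tr h) (tr h^-1%g).
Proof. by move=> A; rewrite trM mulVg tr1. Qed.

Lemma trKV h : cancel (tr h^-1%g) (tr h).
Proof. by move=> A; rewrite trM mulgV tr1. Qed.

Lemma tr_coset h g : tr h (lcoset g H) = lcoset (h * g)%g H.
Proof. by rewrite /lcoset -/(tr g H) trM. Qed.

Lemma C_tr h A : C A -> C (tr h A).
Proof. by move=> [g ->]; exists (h * g)%g; rewrite /lcoset -/(tr _ _) trM. Qed.

Lemma muE N : mu N = counting (N `&` C).
Proof. by []. Qed.

Lemma mu_tr h N : mu (tr h @^-1` N) = mu N.
Proof.
rewrite !muE -[RHS](counting_image _ (trKV h)).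
congr counting; apply/seteqP; split => [A [NA CA]|A [B [NB CB] <-]].
  by exists (tr h A); [split => //; exact: C_tr|rewrite trK].
split; first by rewrite /preimage /= trKV.
exact: C_tr.
Qed.

Lemma aeP (xi eta : discr (set G) -> R[i]) :
  L2eq mu xi eta <-> (forall A, C A -> xi A = eta A).
Proof.
split.
  move=> [N [mN N0 sN]] A CA; apply: contrapT => neq.
  have : N `&` C = set0 by apply: (counting_eq0 (R := R)).
  move/seteqP => [/(_ A) h _]; apply: h; split => //; apply: sN => /= /(_ I); exact.
move=> h; exists [set A | xi A <> eta A]; split => //.
- rewrite muE (_ : _ `&` _ = set0) /counting ?asboolT ?fset_set0 //.
  by apply/seteqP; split => // A [/= + CA]; apply; exact: h.
- by move=> A /= hA; apply: contra_not hA.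
Qed.

Lemma int_tr h (f : discr (set G) -> \bar R) : (forall A, (0 <= f A)%E) ->
  (\int[mu]_A f (tr h A) = \int[mu]_A f A)%E.
Proof.
move=> f0.
pose t : discr (set G) -> discr (set G) := tr h.
have mt : measurable_fun setT t by [].
have e1 := @ge0_integral_pushforward _ _ _ _ R t mt mu setT f (measurableT) (fun _ _ _ => I) (fun A _ => f0 A).
transitivity (\int[pushforward mu t]_A f A)%E.
  by rewrite e1.
apply: eq_measure_integral => A _ _; exact: mu_tr.
Qed.

Lemma int_trE h (f : discr (set G) -> \bar R) :
  (\int[mu]_A f (tr h A) = \int[mu]_A f A)%E.
Proof.
rewrite integralE [RHS]integralE.
have p0 : forall g : discr (set G) -> \bar R, forall A, (0 <= g^\+ A)%E by move=> g A; exact: funepos_ge0.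
have n0 : forall g : discr (set G) -> \bar R, forall A, (0 <= g^\- A)%E by move=> g A; exact: funeneg_ge0.
rewrite -(int_tr h (p0 f)) -(int_tr h (n0 f)).
by rewrite (_ : (fun A => f (tr h A)) = f \o tr h) // funepos_comp funeneg_comp.
Qed.

Lemma Rint_tr h (f : discr (set G) -> R) :
  Rintegral mu setT (fun A => f (tr h A)) = Rintegral mu setT f.
Proof. by rewrite /Rintegral (int_trE h (EFin \o f)). Qed.

End coset.

Section partii.
Context (R : realType) (G : groupType) (X : ptopologicalType) (act : G -> X -> X).
Hypotheses (cX : compact [set: X]) (gs : gspace act).
Context (x : X) (H : set G).
Hypotheses (HH : subgroup H) (H0 : stab0 act x `<=` H) (Hs : H `<=` stab act x).
Local Notation mu := (cosetmeas R H).
Local Notation T := (discr (set G)).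

Lemma meas_discr (f : T -> R) : measurable_fun setT f.
Proof. by move=> _ Y _; exact: discr_measurable. Qed.

Lemma cmeas_discr (xi : T -> R[i]) : cmeasurable xi.
Proof. by split; exact: meas_discr. Qed.

Lemma actM a b y : act (a * b)%g y = act a (act b y).
Proof. by case: gs => _ _ ->. Qed.
Lemma act1 y : act 1%g y = y.
Proof. by case: gs => _ -> _. Qed.
Lemma actVK g y : act g^-1%g (act g y) = y.
Proof. by rewrite -actM mulVg act1. Qed.
Lemma actKV g y : act g (act g^-1%g y) = y.
Proof. by rewrite -actM mulgV act1. Qed.

Lemma lcosetP k : lcoset k H k.
Proof. by exists 1%g; [case: HH|rewrite mulg1]. Qed.

Lemma lcoset_mulH k h : H h -> lcoset (k * h)%g H = lcoset k H.
Proof.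
case: HH => H1 HM HV hH.
apply/seteqP; split => [y [z Hz <-]|y [z Hz <-]].
  by exists (h * z)%g; [exact: HM|rewrite mulgA].
exists (h^-1 * z)%g; first by apply: HM => //; exact: HV.
by rewrite -mulgA (mulgA h) mulgV mul1g.
Qed.

Lemma xget_coset k : act (xget 1%g (lcoset k H)) x = act k x.
Proof.
have [h Hh <-] := xgetI 1%g (lcosetP k).
by rewrite actM (Hs Hh).
Qed.

Lemma qr_L2 g xi : L2 mu xi -> L2 mu (quasi_reg g xi).
Proof.
move=> Lxi; split; first exact: cmeas_discr.
have /integrableP[_ fin] := L2_int Lxi.
apply/integrableP; split; first by apply/measurable_EFinP; exact: meas_discr.
move: fin; rewrite -(int_tr H g^-1%g) //.
Qed.

Lemma qrE g (xi : T -> R[i]) A : quasi_reg g xi A = xi (tr g^-1%g A).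
Proof. by []. Qed.

Lemma qr_bounded g : bounded_op mu (@quasi_reg R G g).
Proof.
split.
- exact: qr_L2.
- move=> xi eta _ _ /aeP h; apply/aeP => A CA; rewrite !qrE; apply: h; exact: C_tr.
- by move=> a xi eta _ _; apply: L2eq_pw.
- exists 1 => xi Lxi; rewrite mul1r /L2norm2.
  by rewrite -[X in _ <= X](Rint_tr H g^-1%g).
Qed.

Lemma qr_adj g : adjoint_of mu (@quasi_reg R G g) (quasi_reg g^-1%g).
Proof.
move=> xi eta _ _; rewrite /L2ip; congr Complex; symmetry;
  rewrite -(Rint_tr H g^-1%g); apply: eq_Rintegral => A _; by rewrite !qrE trK.
Qed.

Lemma qr_1 : op_eq mu (@quasi_reg R G 1%g) id.
Proof. by move=> xi _; apply: L2eq_pw => A; rewrite qrE invg1 tr1. Qed.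

Lemma qr_M g h : op_eq mu (@quasi_reg R G (g * h)%g) (quasi_reg g \o quasi_reg h).
Proof. by move=> xi _; apply: L2eq_pw => A /=; rewrite !qrE trM invgM. Qed.

Lemma poisson_ush : unital_star_hom mu (@poisson G X act x R).
Proof.
have := ush_comp mu (p := fun A : T => act (xget 1%g A) x) cX (fun f _ => cmeas_discr _).
exact.
Qed.

Lemma qr_equiv g f : Cfun f -> op_eq mu (poisson act x (Pilot.Defs.fact act g f))
  (@quasi_reg R G g \o poisson act x f \o quasi_reg g^-1%g).
Proof.
move=> cf xi _; apply/aeP => _ [k ->].
rewrite /= /poisson /Pilot.Defs.fact qrE tr_coset !xget_coset qrE -tr_coset trK actM.
by [].
Qed.

Lemma qr_germ g f : Cfun f -> supp f `<=` Defs.fixset act g ->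
  op_eq mu (@quasi_reg R G g \o poisson act x f) (poisson act x f).
Proof.
move=> cf hsupp xi _; apply/aeP => _ [k ->].
rewrite /= /poisson qrE tr_coset !xget_coset.
have hU : [set y | f y != 0] `<=` Defs.fixset act g.
  by move=> y Uy; apply: hsupp; exact: subset_closure.
case: (eqVneq (f (act k x)) 0) => fk.
  rewrite fk mul0r.
  case: (eqVneq (f (act (g^-1 * k)%g x)) 0) => [->|fz]; first by rewrite mul0r.
  have := hU _ fz; rewrite /Defs.fixset /= actM actKV => e.
  by move: fz; rewrite actM -e fk eqxx.
have gy := hU _ fk; move: gy; rewrite /Defs.fixset /= => gy.
have e1 : act (g^-1 * k)%g x = act k x by rewrite actM -{1}gy actVK.
have st : stab0 act x (k^-1 * g * k)%g.
  exists (act k @^-1` [set y | f y != 0]); split.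
  - apply: open_comp; last exact: cfun_open_nz.
    by move=> z _; case: gs => cg _ _; apply: cg.
  - by [].
  - move=> z /= hz; have := hU _ hz; rewrite /Defs.fixset /= => ez.
    by rewrite !actM ez actVK.
have Hk : H (k^-1 * g^-1 * k)%g.
  have := H0 st; case: HH => _ _ HV /HV.
  by rewrite !invgM invgK mulgA.
have e2 : lcoset (g^-1 * k)%g H = lcoset k H.
  by rewrite -(lcoset_mulH k Hk) !mulgA mulgV mul1g.
by rewrite e1 e2.
Qed.

Theorem partii : germinal_rep act mu (@quasi_reg R G) (poisson act x).
Proof.
apply: germinal_of.
- exact: qr_bounded.
- exact: qr_adj.
- exact: qr_1.
- exact: qr_M.
- exact: poisson_ush.
- exact: qr_equiv.
- exact: qr_germ.
Qed.

End partii.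


Section density.
Context d (T : measurableType d) (R : realType).
Variables (mu nu : {measure set T -> \bar R}) (g : T -> R).
Hypotheses (g0 : forall x, 0 <= g x) (mg : measurable_fun setT g)
  (hnu : forall A, measurable A -> nu A = (\int[mu]_(x in A) (g x)%:E)%E).
Import HBNNSimple.
Local Open Scope ereal_scope.

Lemma density_cv f E : (forall x, 0 <= f x) -> measurable E -> measurable_fun E f ->
  \int[mu]_(x in E) (f x * (g x)%:E) = \int[nu]_(x in E) f x.
Proof.
move=> f0 mE mf; set G := EFin \o g.
have mG : measurable_fun E G.
  by apply/measurable_EFinP; exact: (measurable_funS measurableT).
have G0 x : 0 <= G x by rewrite lee_fin.
pose h := nnsfun_approx mE mf.
have -> : \int[nu]_(x in E) f x =
    lim (\int[nu]_(x in E) (EFin \o h n) x @[n --> \oo]).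
  have fE x : E x -> f x = lim ((EFin \o h n) x @[n --> \oo]).
    by move=> Ex; apply/esym/cvg_lim => //; exact: cvg_nnsfun_approx.
  under eq_integral => x /[!inE] /fE -> //.
  apply: monotone_convergence => //.
  - move=> n; apply/measurable_EFinP.
    by apply: (measurable_funS measurableT) => //; exact/measurable_funP.
  - by move=> n x Ex //=; rewrite lee_fin.
  - by move=> x Ex a b ab; rewrite lee_fin; exact/lefP/nd_nnsfun_approx.
have -> : \int[mu]_(x in E) (f x * G x) =
    lim (\int[mu]_(x in E) ((EFin \o h n) \* G) x @[n --> \oo]).
  have fg x : E x -> f x * G x = lim (((EFin \o h n) \* G) x @[n --> \oo]).
    by move=> Ex; apply/esym/cvg_lim => //; apply: cvgeZr;
      [by []|exact: cvg_nnsfun_approx].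
  under eq_integral => x /[!inE] /fg -> //.
  apply: monotone_convergence => [//| | |].
  - move=> n; apply/emeasurable_funM => //; apply/measurable_EFinP.
    by apply: (measurable_funS measurableT) => //; exact/measurable_funP.
  - by move=> n x Ex /=; rewrite mule_ge0 ?lee_fin.
  - by move=> x Ex a b ab/=; rewrite lee_wpmul2r ?lee_fin//; exact/lefP/nd_nnsfun_approx.
suff suf n : \int[mu]_(x in E) ((EFin \o h n) x * G x) =
    \int[nu]_(x in E) (EFin \o h n) x.
  by under eq_fun do rewrite suf.
transitivity (\int[nu]_(x in E)
   (\sum_(y \in range (h n)) (y * \1_(h n @^-1` [set y]) x)%:E)); last first.
  by apply: eq_integral => t tE; rewrite /= fimfunE -fsumEFin.
have indich m r : measurable_fun E (fun x => (r * \1_(h m @^-1` [set r]) x)%:E).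
  by apply: (measurable_comp measurableT) => //; exact: measurable_funM.
rewrite ge0_integral_fsum//; last by move=> m y Ey; exact: nnfun_muleindic_ge0.
transitivity (\int[mu]_(x in E) (\sum_(y \in range (h n))
    (y * \1_(h n @^-1` [set y]) x)%:E * G x)).
  under [RHS]eq_integral => x xE.
    rewrite -ge0_mule_fsuml => [|y]; last exact: nnfun_muleindic_ge0.
    rewrite fsumEFin // -(fimfunE _ x); over.
  by [].
rewrite ge0_integral_fsum//; last 2 first.
  - by move=> y; apply: emeasurable_funM.
  - by move=> m y Ey; rewrite mule_ge0 ?G0 // nnfun_muleindic_ge0.
apply: eq_fsbigr => r rhn.
under [RHS]eq_integral do rewrite EFinM.
rewrite integralZl_indic_nnsfun => //.
under eq_integral do rewrite EFinM -muleA.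
rewrite ge0_integralZl//.
- under eq_integral do rewrite muleC.
  rewrite (eq_integral (G \_ (h n @^-1` [set r]))); last first.
    by move=> x xE; rewrite epatch_indic.
  by rewrite -integral_mkcondr -hnu// integral_indic// setIC.
- by apply: emeasurable_funM => //; exact/measurable_EFinP.
- by move=> t Et; rewrite mule_ge0 ?lee_fin.
- by move: rhn; rewrite inE => -[t _ <-]; rewrite lee_fin.
Qed.

End density.

Section borel.
Context (R : realType) (X : ptopologicalType).
Local Notation T := (borelT X).

Lemma open_meas (U : set X) : open U -> measurable (U : set T).
Proof. by move=> oU; apply: sub_sigma_algebra. Qed.

Lemma cont_meas_self (h : X -> X) : continuous h -> measurable_fun setT (h : T -> T).
Proof.
move=> ch; apply: (@measurability _ _ T T setT (h : T -> T) (@open X)) => //.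
move=> _ [B oB <-]; rewrite setTI; apply: open_meas.
by apply: open_comp => // y _; apply: ch.
Qed.

Lemma cont_meas_R (h : X -> R) : continuous h -> measurable_fun setT (h : T -> R).
Proof.
move=> ch; apply: (@measurability _ _ T R setT h (@RGenOpens.G R)).
  exact: RGenOpens.measurableE.
move=> _ [B [a [b ->]] <-]; rewrite setTI; apply: open_meas.
apply: open_comp; last exact: itv_open.
by move=> y _; apply: ch.
Qed.

Lemma cfun_cmeas (f : X -> R[i]) : Cfun f -> cmeasurable (f : T -> R[i]).
Proof. by move=> [c1 c2]; split; apply: cont_meas_R. Qed.

End borel.

Definition pfm d1 d2 (T1 : measurableType d1) (T2 : measurableType d2) (R : realType)
  (m : {measure set T1 -> \bar R}) (f : T1 -> T2) (mf : measurable_fun setT f) :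
  {measure set T2 -> \bar R}.
Proof. refine (pushforward m f); exact mf. Defined.

Lemma pfmE d1 d2 (T1 : measurableType d1) (T2 : measurableType d2) (R : realType)
  (m : {measure set T1 -> \bar R}) (f : T1 -> T2) (mf : measurable_fun setT f) A :
  pfm m mf A = m (f @^-1` A).
Proof. by []. Qed.

Section parti.
Context (R : realType) (G : groupType) (X : ptopologicalType) (act : G -> X -> X).
Hypotheses (cX : compact [set: X]) (gs : gspace act).
Context (nu : {measure set borelT X -> \bar R}) (D : G -> borelT X -> R).
Hypotheses (sf : sigma_finite setT nu) (qi : quasi_invariant act nu)
  (rn : rn_derivative act nu D).
Local Notation T := (borelT X).

Lemma actM' a b y : act (a * b)%g y = act a (act b y).
Proof. by case: gs => _ _ ->. Qed.
Lemma act1' y : act 1%g y = y.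
Proof. by case: gs => _ -> _. Qed.
Lemma actVK' g y : act g^-1%g (act g y) = y.
Proof. by rewrite -actM' mulVg act1'. Qed.
Lemma actKV' g y : act g (act g^-1%g y) = y.
Proof. by rewrite -actM' mulgV act1'. Qed.

Lemma act_meas g : measurable_fun setT (act g : T -> T).
Proof. by apply: cont_meas_self; case: gs => c _ _; apply: c. Qed.

Lemma D_ge0 g y : 0 <= D g y. Proof. by case: (rn g). Qed.
Lemma D_meas g : measurable_fun setT (D g). Proof. by case: (rn g). Qed.
Lemma D_int g (A : set T) : measurable A -> nu (act g @^-1` A) = (\int[nu]_(y in A) (D g y)%:E)%E.
Proof. by case: (rn g) => _ _; apply. Qed.

Lemma aeS' (P Q : T -> Prop) : (forall y, P y -> Q y) ->
  {ae nu, forall y, P y} -> {ae nu, forall y, Q y}.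
Proof.
move=> h [N [mN N0 sN]]; exists N; split => // y /= nQ; apply: sN => /= /h; exact: nQ.
Qed.

Lemma ae_comp g (P : T -> Prop) : {ae nu, forall y, P y} -> {ae nu, forall y, P (act g y)}.
Proof.
move=> [N [mN N0 sN]]; exists (act g @^-1` N); split.
- by rewrite -[X in measurable X]setTI; apply: act_meas.
- by apply/(qi g mN).1.
- by move=> y /= nP; apply: sN.
Qed.

Lemma L2eq_comp g (xi eta : T -> R[i]) : L2eq nu xi eta ->
  L2eq nu (fun y => xi (act g y)) (fun y => eta (act g y)).
Proof.
move=> [N [mN N0 sN]]; exists (act g @^-1` N); split.
- by rewrite -[X in measurable X]setTI; apply: act_meas.
- by apply/(qi g mN).1.
- move=> y /= nP; apply: sN => /= h; apply: nP => _; exact: h I.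
Qed.

Lemma CV g (psi : T -> \bar R) E : measurable E -> (forall y, (0 <= psi y)%E) ->
  measurable_fun setT psi ->
  (\int[nu]_(y in E) (psi y * (D g y)%:E) = \int[nu]_(z in act g @^-1` E) psi (act g z))%E.
Proof.
move=> mE p0 mp.
have mg := act_meas g.
rewrite (@density_cv _ _ _ nu (pfm nu mg) (D g) (D_ge0 g) (D_meas g)) //.
- rewrite (_ : (\int[pfm nu mg]_(y in E) psi y)%E = (\int[pushforward nu (act g : T -> T)]_(y in E) psi y)%E) //.
  have mpE : measurable_fun E psi by exact: (measurable_funS measurableT (@subsetT _ E) mp).
  by rewrite (ge0_integral_pushforward mg nu mE mpE (fun y _ => p0 y)).
- by move=> A mA; rewrite pfmE D_int.
- exact: (measurable_funS measurableT).
Qed.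

Lemma posE (a d : R) : 0 <= d ->
  (maxe (a * d)%:E 0 = maxe a%:E 0 * d%:E)%E.
Proof.
move=> d0; have [ha|ha] := leP a 0.
  rewrite max_r ?lee_fin ?max_r ?lee_fin ?mul0e //; nra.
rewrite max_l ?lee_fin ?max_l ?lee_fin -?EFinM //; [lra|nra].
Qed.

Lemma negE (a d : R) : 0 <= d ->
  (maxe (- (a * d)%:E) 0 = maxe (- a%:E) 0 * d%:E)%E.
Proof. by move=> d0; rewrite -!EFinN -mulNr posE. Qed.

Lemma CVs g (F : T -> R) : measurable_fun setT F ->
  (\int[nu]_y ((F (act g^-1%g y)) * D g y)%:E = \int[nu]_y (F y)%:E)%E.
Proof.
move=> mF.
have mFg : measurable_fun setT (fun y : T => F (act g^-1%g y)).
  exact: (measurableT_comp mF (act_meas _)).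
rewrite integralE [RHS]integralE.
have e1 : (fun y : T => ((F (act g^-1%g y)) * D g y)%:E)^\+%E =
    (fun y : T => ((EFin \o F)^\+ (act g^-1%g y) * (D g y)%:E)%E).
  by apply: funext => y; rewrite !funeposE posE // D_ge0.
have e2 : (fun y : T => ((F (act g^-1%g y)) * D g y)%:E)^\-%E =
    (fun y : T => ((EFin \o F)^\- (act g^-1%g y) * (D g y)%:E)%E).
  by apply: funext => y; rewrite !funenegE negE // D_ge0.
rewrite e1 e2 !CV //.
- rewrite preimage_setT; congr (_ - _)%E; apply: eq_integral => y _; by rewrite actVK'.
all: apply: measurableT_comp (act_meas _);
  first [apply: measurable_funeneg|apply: measurable_funepos]; exact/measurable_EFinP.
Qed.

Lemma RCV g (F : T -> R) : measurable_fun setT F ->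
  Rintegral nu setT (fun y : T => F (act g^-1%g y) * D g y) = Rintegral nu setT F.
Proof. by move=> mF; rewrite /Rintegral CVs. Qed.

Lemma uniq_dens (f1 f2 : T -> R) : (forall y, 0 <= f1 y) ->
  measurable_fun setT f1 -> measurable_fun setT f2 ->
  (forall A : set T, measurable A ->
     (\int[nu]_(y in A) (f1 y)%:E = \int[nu]_(y in A) (f2 y)%:E)%E) ->
  {ae nu, forall y, f1 y = f2 y}.
Proof.
move=> f10 mf1 mf2 hA.
have [F UF hF] := sf.
pose B n m := F n `&` [set y : T | f1 y <= m%:R].
have mB n m : measurable (B n m).
  apply: measurableI; first by case: (hF n).
  have := mf1 measurableT _ (measurable_itv `]-oo, m%:R]); rewrite setTI.
  congr measurable; apply/seteqP; split => y /=; by rewrite in_itv.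
have aeB n m : ae_eq nu (B n m) (EFin \o f1) (EFin \o f2).
  apply: integral_ae_eq => //.
  - apply: (@le_integrable _ _ _ _ _ _ _ (EFin \o cst (m%:R : R))) => //.
    + apply/measurable_EFinP; exact: (measurable_funS measurableT).
    + move=> y [_ /= hy]; rewrite lee_fin !ger0_norm //; exact: f10.
    + apply/integrableP; split; first by apply/measurable_EFinP; exact: measurable_cst.
      rewrite (_ : (fun x => _) = cst (m%:R%:E)); last first.
        by apply: funext => y /=; rewrite ger0_norm.
      rewrite integral_cst //; apply: (le_lt_trans (y := (m%:R%:E * nu (F n))%E)).
        rewrite lee_wpmul2l ?lee_fin //; apply: le_measure; rewrite ?inE //.
          by case: (hF n).
        by move=> y [].
      by rewrite lte_mul_pinfty ?lee_fin //; case: (hF n).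
  - apply/measurable_EFinP; exact: (measurable_funS measurableT).
  - by move=> E _ mE; apply: hA.
have ae2 n m : {ae nu, forall y, B n m y -> f1 y = f2 y}.
  by have := aeB n m; apply: filterS => y h /h [].
apply: (negligibleS (A := \bigcup_n \bigcup_m ~` [set y | B n m y -> f1 y = f2 y])).
  move=> y /= neq.
  have : setT y by [].
  rewrite UF => -[n _ Fn]; exists n => //; exists (Num.trunc (f1 y)).+1 => //= h.
  apply: neq; apply: h; split => //; rewrite /=; apply: ltW; exact: truncnS_gt.
apply: negligible_bigcup => n; apply: negligible_bigcup => m; exact: ae2.
Qed.

Lemma D1 : {ae nu, forall y, D 1%g y = 1}.
Proof.
apply: uniq_dens.
- exact: D_ge0.
- exact: D_meas.
- exact: measurable_cst.
- move=> A mA; rewrite -D_int // (_ : (fun y : T => (1%:E)%E) = cst 1%E) // integral_cst // mul1e.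
  suff -> : (act 1%g @^-1` A : set T) = A by [].
  by apply/seteqP; split => y /=; rewrite act1'.
Qed.

Lemma chain g h : {ae nu, forall y, D (g * h)%g y = D h (act g^-1%g y) * D g y}.
Proof.
apply: uniq_dens.
- exact: D_ge0.
- exact: D_meas.
- apply: measurable_funM; last exact: D_meas.
  exact: (measurableT_comp (D_meas h) (act_meas _)).
- move=> A mA; rewrite -D_int //.
  under [RHS]eq_integral do rewrite EFinM.
  rewrite (CV g (psi := fun y => (D h (act g^-1%g y))%:E)) //.
  + under [RHS]eq_integral do rewrite actVK'.
    rewrite -D_int; last by rewrite -[X in measurable X]setTI; apply: act_meas.
    suff -> : (act (g * h)%g @^-1` A : set T) = act h @^-1` (act g @^-1` A) by [].
    by apply/seteqP; split => y /=; rewrite actM'.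
  + by move=> y; rewrite lee_fin D_ge0.
  + apply/measurable_EFinP; exact: (measurableT_comp (D_meas h) (act_meas _)).
Qed.

Lemma Dinv g : {ae nu, forall y, D g^-1%g (act g^-1%g y) * D g y = 1}.
Proof.
have := chain g g^-1%g; rewrite mulgV => h; have := D1.
apply: filterS2 h => y -> ->. by [].
Qed.

Local Open Scope complex_scope.
Lemma cM (a b : R) : (a * b)%:C = a%:C * b%:C :> R[i].
Proof. by apply/eqP; rewrite eq_complex /= !mulr0 mul0r subr0 addr0 !eqxx. Qed.

Lemma c1 : (1 : R)%:C = 1 :> R[i].
Proof. by []. Qed.

Lemma cabs2_sqrtC (a : R) (z : R[i]) : 0 <= a -> cabs2 ((Num.sqrt a)%:C * z) = a * cabs2 z.
Proof.
move=> a0; rewrite cabs2M; congr (_ * _).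
by rewrite /cabs2 /= expr0n /= addr0 sqr_sqrtr.
Qed.

Lemma sqrt_meas g : measurable_fun setT (fun y : T => Num.sqrt (D g y)).
Proof. exact: (measurableT_comp (continuous_measurable_fun (@sqrt_continuous R)) (D_meas g)). Qed.

Lemma cmeas_compact g (xi : T -> R[i]) : cmeasurable xi ->
  cmeasurable (fun y : T => xi (act g y)).
Proof. by move=> [h1 h2]; split; [exact: (measurableT_comp h1 (act_meas g))|exact: (measurableT_comp h2 (act_meas g))]. Qed.

Lemma k_cmeas g xi : cmeasurable xi -> cmeasurable (koopman act D g xi).
Proof.
move=> mxi; apply: cmeas_mul; last exact: cmeas_compact.
split; first exact: sqrt_meas.
exact: measurable_cst.
Qed.

Lemma k_norm g xi : cmeasurable xi ->
  (\int[nu]_y (cabs2 (koopman act D g xi y))%:E = \int[nu]_y (cabs2 (xi y))%:E)%E.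
Proof.
move=> mxi; rewrite -(CVs g (F := fun y => cabs2 (xi y))); last exact: cmeas_cabs2.
by apply: eq_integral => y _; rewrite /koopman cabs2_sqrtC ?D_ge0 // mulrC.
Qed.

Lemma L2_of_norm (xi eta : T -> R[i]) : cmeasurable eta -> L2 nu xi ->
  (\int[nu]_y (cabs2 (eta y))%:E = \int[nu]_y (cabs2 (xi y))%:E)%E -> L2 nu eta.
Proof.
move=> meta [mxi /integrableP [_ fin]] e; split => //.
apply/integrableP; split; first by apply/measurable_EFinP; exact: cmeas_cabs2.
have ab (zeta : T -> R[i]) : (\int[nu]_y `|(EFin \o (fun t => cabs2 (zeta t))) y|)%E =
    (\int[nu]_y (cabs2 (zeta y))%:E)%E.
  by apply: eq_integral => y _; rewrite /comp abse_EFin ger0_norm // cabs2_ge0.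
by rewrite ab e -ab.
Qed.

Lemma k_bounded g : bounded_op nu (koopman act D g).
Proof.
split.
- move=> xi Lxi; have [mxi _] := Lxi.
  exact: (L2_of_norm (k_cmeas g mxi) Lxi (k_norm g mxi)).
- move=> xi eta _ _ h; have := L2eq_comp g^-1%g h.
  by apply: filterS => y hy _; rewrite /koopman hy.
- by move=> a xi eta _ _; apply: L2eq_pw => y; rewrite /koopman; ring.
- exists 1 => xi [mxi _]; rewrite mul1r /L2norm2 /Rintegral k_norm //.
Qed.

Lemma Rint_ae (f1 f2 : T -> R) : measurable_fun setT f1 -> measurable_fun setT f2 ->
  {ae nu, forall y, f1 y = f2 y} -> Rintegral nu setT f1 = Rintegral nu setT f2.
Proof.
move=> m1 m2 h; rewrite /Rintegral; congr fine.
apply: ae_eq_integral => //; try by apply/measurable_EFinP.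
by apply: filterS h => y -> _.
Qed.

Lemma k_adj g : adjoint_of nu (koopman act D g) (koopman act D g^-1%g).
Proof.
move=> xi eta [mxi _] [meta _].
have mk := k_cmeas g^-1%g meta.
have mkg := k_cmeas g mxi.
have hc := cmeas_mul mxi (cmeas_conj mk).
have hc2 := cmeas_mul mkg (cmeas_conj meta).
rewrite /L2ip; congr Complex.
- rewrite -[RHS](RCV g); last by case: hc.
  apply: Rint_ae; [by case: hc2| |].
    apply: measurable_funM; last exact: D_meas.
    by case: (cmeas_compact g^-1%g hc).
  apply: aeS' (Dinv g) => y e.
  rewrite /koopman invgK actKV'.
  have hs : Num.sqrt (D g^-1%g (act g^-1%g y)) * D g y = Num.sqrt (D g y).
    have hb := D_ge0 g y; have ha := D_ge0 g^-1%g (act g^-1%g y).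
    by rewrite -[X in _ * X](sqr_sqrtr hb) expr2 mulrA -sqrtrM // e sqrtr1 mul1r.
  rewrite -hs; case: (xi (act g^-1%g y)) => a b; case: (eta y) => c e' /=; ring.
- rewrite -[RHS](RCV g); last by case: hc.
  apply: Rint_ae; [by case: hc2| |].
    apply: measurable_funM; last exact: D_meas.
    by case: (cmeas_compact g^-1%g hc).
  apply: aeS' (Dinv g) => y e.
  rewrite /koopman invgK actKV'.
  have hs : Num.sqrt (D g^-1%g (act g^-1%g y)) * D g y = Num.sqrt (D g y).
    have hb := D_ge0 g y; have ha := D_ge0 g^-1%g (act g^-1%g y).
    by rewrite -[X in _ * X](sqr_sqrtr hb) expr2 mulrA -sqrtrM // e sqrtr1 mul1r.
  rewrite -hs; case: (xi (act g^-1%g y)) => a b; case: (eta y) => c e' /=; ring.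
Qed.

Lemma k_1 : op_eq nu (koopman act D 1%g) id.
Proof.
move=> xi _; have := D1; apply: filterS => y e _.
by rewrite /koopman e sqrtr1 invg1 act1' c1 mul1r.
Qed.

Lemma k_M g h : op_eq nu (koopman act D (g * h)%g) (koopman act D g \o koopman act D h).
Proof.
move=> xi _; have := chain g h; apply: filterS => y e _.
rewrite /koopman /= e sqrtrM ?D_ge0 // cM invgM actM'.
ring.
Qed.

Lemma mult_ush : unital_star_hom nu (@mult_op X R).
Proof.
have := ush_comp nu (p := fun y : T => (y : X)) cX (fun f cf => cfun_cmeas cf).
exact.
Qed.

Lemma k_equiv g f : Cfun f -> op_eq nu (mult_op (Pilot.Defs.fact act g f))
  (koopman act D g \o mult_op f \o koopman act D g^-1%g).
Proof.
move=> cf xi _; apply: aeS' (Dinv g) => y e _.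
rewrite /= /mult_op /koopman /Pilot.Defs.fact invgK actKV'.
have ha := D_ge0 g^-1%g (act g^-1%g y); have hb := D_ge0 g y.
have e2 : (Num.sqrt (D g y))%:C * (Num.sqrt (D g^-1%g (act g^-1%g y)))%:C = 1 :> R[i].
  by rewrite -cM -sqrtrM // mulrC e sqrtr1.
transitivity ((Num.sqrt (D g y))%:C * (Num.sqrt (D g^-1%g (act g^-1%g y)))%:C *
   (f (act g^-1%g y) * xi y)); first by rewrite e2 mul1r.
ring.
Qed.

Lemma k_germ g f : Cfun f -> supp f `<=` Defs.fixset act g ->
  op_eq nu (koopman act D g \o mult_op f) (mult_op f).
Proof.
move=> cf hsupp xi _.
pose U : set T := [set y | f y != 0].
have mU : measurable U by apply: open_meas; exact: cfun_open_nz.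
have hU : U `<=` Defs.fixset act g.
  by move=> y Uy; apply: hsupp; exact: subset_closure.
have aeU : {ae nu, forall y, D g y * \1_U y = \1_U y}.
  apply: uniq_dens.
  - by move=> y; rewrite mulr_ge0 ?D_ge0.
  - apply: measurable_funM; first exact: D_meas.
    exact: measurable_indic.
  - exact: measurable_indic.
  - move=> A mA.
    under eq_integral do rewrite EFinM.
    rewrite -__deprecated__integral_setI_indic // integral_indic // -D_int; last exact: measurableI.
    suff -> : (act g @^-1` (A `&` U) : set T) = A `&` U by rewrite setIC.
    apply/seteqP; split => y /=.
      move=> [hA hUy]; have := hU _ hUy; rewrite /Defs.fixset /= => e.
      have ey : act g y = y by have := congr1 (act g^-1%g) e; rewrite !actVK'.
      by rewrite -ey.
    by move=> [hA hUy]; have := hU _ hUy; rewrite /Defs.fixset /= => ->.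
apply: aeS' aeU => y e _.
rewrite /= /mult_op /koopman.
case: (eqVneq (f y) 0) => fy.
  rewrite fy mul0r.
  case: (eqVneq (f (act g^-1%g y)) 0) => [->|fz]; first by rewrite !mul0r mulr0.
  have := hU _ fz; rewrite /Defs.fixset /= actKV' => ey.
  by move: fz; rewrite -ey fy eqxx.
have Uy : U y by [].
move: e; rewrite indicE mem_set // mulr1 => ->.
have := hU _ Uy; rewrite /Defs.fixset /= => ey.
have e1 : act g^-1%g y = y by rewrite -{1}ey actVK'.
by rewrite e1 sqrtr1 c1 mul1r.
Qed.

Theorem parti_main : germinal_rep act nu (koopman act D) (@mult_op X R).
Proof.
apply: germinal_of.
- exact: k_bounded.
- exact: k_adj.
- exact: k_1.
- exact: k_M.
- exact: mult_ush.
- exact: k_equiv.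
- exact: k_germ.
Qed.

End parti.

Theorem mainTheorem19 (R : realType) (G : groupType) (X : ptopologicalType)
    (act : G -> X -> X) :
  hausdorff_space X -> compact [set: X] -> gspace act ->
  (* (i) Koopman representation with multiplication operators *)
  (forall (nu : {measure set borelT X -> \bar R}) (D : G -> borelT X -> R),
      sigma_finite setT nu -> quasi_invariant act nu ->
      rn_derivative act nu D ->
      germinal_rep act nu (koopman act D) (@mult_op X R))
  /\
  (* (ii) quasi-regular representation with the Poisson map *)
  (forall (x : X) (H : set G),
      subgroup H -> stab0 act x `<=` H -> H `<=` stab act x ->
      germinal_rep act (cosetmeas R H) (@quasi_reg R G) (poisson act x)).
Proof.
move=> hX cX gs; split.
- move=> nu D sf qi rn; exact: (parti_main cX gs sf qi rn).
- move=> x H HH H0 Hs; apply: partii => //.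
Qed.
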